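(* Let $G$ be a connected finite simple undirected graph with at least two vertices, $W:V_G\to\mathbb{R}$ a potential, $\psi$ the ground state of $H_{G,W}$ with $\psi(x)>0$ for all $x$ and $\sum_x\psi(x)^2=1$, and $\gamma_H$ the gap between the smallest and second-smallest eigenvalues of $H_{G,W}$. For each ordered pair $(x,y)$ of distinct vertices choose a path $\gamma_{xy}$ in $G$ from $x$ to $y$ that traverses no edge more than once, and let $\Gamma$ be this collection of paths. Then $\gamma_H\ge 1/\kappa'$, where $$\kappa'=\max_{e}\sum_{\gamma_{xy}\ni e}\psi(x)^2\psi(y)^2\sum_{g\in\gamma_{xy}}\frac{1}{\psi(g_1)\psi(g_2)},$$ the maximum is over edges $e$ of $G$, the outer sum is over the paths in $\Gamma$ that use the edge $e$, the inner sum is over the edges $g$ of the path $\gamma_{xy}$, and $g_1,g_2$ denote the endpoints of $g$.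
   Context: For a finite simple undirected graph $G$ with vertex set $V_G$, let $\mathcal{H}_G$ be the complex Hilbert space with orthonormal basis $\{|x\rangle : x\in V_G\}$. The graph Laplacian is $L_G=\sum_{x} d_x |x\rangle\langle x| - \sum_{x\sim y}|x\rangle\langle y|$, where $d_x$ is the degree of $x$ and the second sum runs over ordered pairs of adjacent vertices. For a potential $W:V_G\to\mathbb{R}$, $H_{G,W}=L_G+\sum_{x} W(x)|x\rangle\langle x|$. For connected $G$ the ground state is nondegenerate and can be chosen with strictly positive amplitudes (Perron–Frobenius). *)

(* Defs.v *)
From HB Require Import structures.
From mathcomp Require Import all_boot all_order all_algebra.
From mathcomp Require Import reals.
Set Implicit Arguments. Unset Strict Implicit. Unset Printing Implicit Defensive.
Import Order.TTheory GRing.Theory Num.Theory.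
Local Open Scope ring_scope.

Definition simple_graph (n : nat) (e : rel 'I_n) : Prop :=
  symmetric e /\ irreflexive e.

Definition connected_graph (n : nat) (e : rel 'I_n) : Prop :=
  forall x y : 'I_n, connect e x y.

Definition deg (n : nat) (e : rel 'I_n) (x : 'I_n) : nat := #|[set y | e x y]|.

Definition hamiltonian (R : realType) (n : nat) (e : rel 'I_n) (W : 'I_n -> R)
  : 'M[R]_n :=
  \matrix_(i, j) (if i == j then (deg e i)%:R + W i
                  else if e i j then -1 else 0).

(* A path from x given by its tail p (vertex list x :: p); its traversed edges
   are the consecutive pairs. *)
Definition path_edges (n : nat) (x : 'I_n) (p : seq 'I_n) : seq ('I_n * 'I_n) :=
  zip (x :: p) p.

Definition uedge (n : nat) (ab : 'I_n * 'I_n) : {set 'I_n} := [set ab.1; ab.2].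

Definition edge_simple_path (n : nat) (e : rel 'I_n) (x y : 'I_n) (p : seq 'I_n)
  : Prop :=
  [/\ path e x p, last x p = y & uniq (map (@uedge n) (path_edges x p))].

(* the quantity kappa' : maximum over edges {u,v} (enumerated as ordered
   adjacent pairs; the summand is symmetric in u,v) of the weighted load. *)
Definition kappa' (R : realType) (n : nat) (e : rel 'I_n) (psi : 'I_n -> R)
  (Gam : 'I_n -> 'I_n -> seq 'I_n) : R :=
  \big[Num.max/0]_(u : 'I_n | true) \big[Num.max/0]_(v : 'I_n | e u v)
    \sum_(x : 'I_n) \sum_(y : 'I_n |
         (x != y) && (uedge (u, v) \in map (@uedge n) (path_edges x (Gam x y))))
       (psi x ^+ 2 * psi y ^+ 2 *
        \sum_(g <- path_edges x (Gam x y)) (psi g.1 * psi g.2)^-1).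

(* Main.v *)
Require Import Defs.
From HB Require Import structures.
From mathcomp Require Import all_boot all_order all_algebra.
From mathcomp Require Import reals.
From mathcomp Require Import ring lra.
Import Order.TTheory GRing.Theory Num.Theory.
Local Open Scope ring_scope.

Lemma cs_step (R : realType) (S A B W C t : R) : 0 < W -> W * t = 1 ->
  0 <= A -> 0 <= B -> S ^+ 2 <= A * B ->
  (C + S) ^+ 2 <= (t + A) * (W * C ^+ 2 + B).
Proof.
move=> W0 wt A0 B0 IH.
have t0 : 0 < t by nra.
have key : 2 * C * S <= t * B + A * W * C ^+ 2.
  have [Az|Ap] := eqVneq A 0.
    have S0 : S = 0.
      by apply/eqP; rewrite -sqrf_eq0 eq_le sqr_ge0 andbT; move: IH; rewrite Az mul0r.
    rewrite S0 Az; nra.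
  have Apos : 0 < A by rewrite lt_def Ap A0.
  have h1 : 0 <= t * (A * W * C - S) ^+ 2 by rewrite mulr_ge0 ?sqr_ge0 // ltW.
  have e : t * (A * W * C - S) ^+ 2 = (W * t) * (A * (A * W * C ^+ 2)) - 2 * A * C * S * (W * t) + t * S ^+ 2 by ring.
  rewrite wt !mulr1 mul1r in e.
  have h2 : 0 <= A * (t * B + A * W * C ^+ 2 - 2 * C * S) by nra.
  by move: h2; rewrite pmulr_rge0 // subr_ge0.
have e2 : C ^+ 2 = t * (W * C ^+ 2) by rewrite mulrA (mulrC t) wt mul1r.
nra.
Qed.

Lemma cs_seq (R : realType) (T : Type) (s : seq T) (w c : T -> R) :
  (forall z, 0 < w z) ->
  (\sum_(z <- s) c z) ^+ 2 <= (\sum_(z <- s) (w z)^-1) * (\sum_(z <- s) w z * c z ^+ 2).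
Proof.
move=> wp; elim: s => [|a s IH]; first by rewrite !big_nil mul0r expr0n.
rewrite !big_cons; apply: cs_step; rewrite ?wp //.
  by rewrite mulfV // gt_eqF.
  by apply: sumr_ge0 => z _; rewrite invr_ge0 ltW.
  by apply: sumr_ge0 => z _; rewrite mulr_ge0 ?sqr_ge0 // ltW.
Qed.

Lemma telescope (R : realType) n (g : 'I_n -> R) (x : 'I_n) (p : seq 'I_n) :
  g (last x p) - g x = \sum_(z <- path_edges x p) (g z.2 - g z.1).
Proof.
elim: p x => [|a p IH] x; first by rewrite /path_edges /= big_nil subrr.
rewrite /path_edges /= big_cons /= -/(path_edges a p) -IH; ring.
Qed.

Lemma path_edges_e n (e : rel 'I_n) x p z :
  path e x p -> z \in path_edges x p -> e z.1 z.2.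
Proof.
elim: p x => [|a p IH] x //= /andP [exa pa].
rewrite /path_edges /= in_cons => /orP [/eqP -> //|]; exact: IH.
Qed.

Lemma le_bigmax0 (R : realType) (I : eqType) (r : seq I) (P : pred I) (F : I -> R) j :
  j \in r -> P j -> F j <= \big[Num.max/0]_(i <- r | P i) F i.
Proof.
elim: r => [//|a r IH]; rewrite in_cons big_cons => /orP [/eqP <- -> | jr Pj].
  by rewrite le_max lexx.
case: (P a); last exact: IH.
by rewrite le_max (IH jr Pj) orbT.
Qed.

Lemma hamE (R : realType) n (e : rel 'I_n) (W : 'I_n -> R) i j :
  hamiltonian e W i j = if i == j then (deg e i)%:R + W i
                  else if e i j then -1 else 0.
Proof. by rewrite mxE. Qed.

Lemma ham_row (R : realType) n (e : rel 'I_n) (W : 'I_n -> R) (X : 'I_n -> R) j :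
  irreflexive e ->
  \sum_i X i * hamiltonian e W i j =
  ((deg e j)%:R + W j) * X j - \sum_i (if e i j then X i else 0).
Proof.
move=> irr.
rewrite (bigD1 j) //= hamE eqxx [in RHS](bigD1 j) //= irr add0r mulrC.
congr (_ + _); rewrite -sumrN; apply: eq_bigr => i /negbTE ne.
by rewrite hamE ne; case: (e i j); rewrite ?mulrN1 ?mulr0 ?oppr0.
Qed.

Lemma swap2 (R : realType) n (e : rel 'I_n) (G : 'I_n -> 'I_n -> R) :
  symmetric e ->
  \sum_j \sum_i (if e i j then G i j else 0) = \sum_j \sum_i (if e i j then G j i else 0).
Proof.
move=> sy; rewrite exchange_big; apply: eq_bigr => a _; apply: eq_bigr => b _.
by rewrite sy.
Qed.

Lemma seq_bound (R : realType) n (e : rel 'I_n) (x : 'I_n) (p : seq 'I_n)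
  (H : 'I_n -> 'I_n -> R) :
  path e x p -> uniq (map (@uedge n) (path_edges x p)) ->
  (forall u v, 0 <= H u v) ->
  \sum_(z <- path_edges x p) H z.1 z.2 <=
  \sum_u \sum_v (if e u v && (uedge (u, v) \in map (@uedge n) (path_edges x p))
                 then H u v else 0).
Proof.
move=> pth un H0.
rewrite big_uniq; last exact: map_uniq un.
rewrite pair_big /= big_mkcond /=; apply: ler_sum => [[u v]] _ /=.
case: ifP => zin; last by case: ifP.
by rewrite (@path_edges_e n e x p (u, v) pth zin) /= map_f.
Qed.

Lemma NbE (R : realType) n (e : rel 'I_n) (X Y : 'I_n -> R) :
  \sum_j (\sum_i (if e i j then X i else 0)) * Y j =
  \sum_j \sum_i (if e i j then X i * Y j else 0).
Proof.
apply: eq_bigr => j _; rewrite mulr_suml; apply: eq_bigr => i _.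
by case: ifP; rewrite ?mul0r.
Qed.

Lemma if_split (R : realType) (b : bool) (x y : R) :
  (if b then x - y else 0) = (if b then x else 0) - (if b then y else 0).
Proof. by case: b; rewrite ?subr0. Qed.

Lemma if_add (R : realType) (b : bool) (x y : R) :
  (if b then x + y else 0) = (if b then x else 0) + (if b then y else 0).
Proof. by case: b; rewrite ?addr0. Qed.

Lemma gen_sym (R : realType) n (e : rel 'I_n) (c X Y : 'I_n -> R) :
  symmetric e ->
  \sum_j (c j * X j - \sum_i (if e i j then X i else 0)) * Y j =
  \sum_j (c j * Y j - \sum_i (if e i j then Y i else 0)) * X j.
Proof.
move=> sy.
rewrite (eq_bigr (fun j => c j * X j * Y j - (\sum_i (if e i j then X i else 0)) * Y j));
  last by move=> j _; rewrite mulrBl.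
rewrite [RHS](eq_bigr (fun j => c j * Y j * X j - (\sum_i (if e i j then Y i else 0)) * X j));
  last by move=> j _; rewrite mulrBl.
rewrite !sumrB !NbE (@swap2 R n e (fun i j => X i * Y j) sy); congr (_ - _).
  by apply: eq_bigr => j _; ring.
apply: eq_bigr => j _; apply: eq_bigr => i _; by rewrite mulrC.
Qed.

Theorem mainTheorem6 (R : realType) (n : nat) (e : rel 'I_n) (W : 'I_n -> R)
  (psi : 'I_n -> R) (lambda1 lambda2 : R) (Gam : 'I_n -> 'I_n -> seq 'I_n) :
  (2 <= n)%N ->
  simple_graph e ->
  connected_graph e ->
  (forall x, 0 < psi x) ->
  \sum_x psi x ^+ 2 = 1 ->
  (\row_i psi i) *m hamiltonian e W = lambda1 *: (\row_i psi i) ->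
  (forall mu, eigenvalue (hamiltonian e W) mu -> lambda1 <= mu) ->
  eigenvalue (hamiltonian e W) lambda2 ->
  lambda1 < lambda2 ->
  (forall mu, eigenvalue (hamiltonian e W) mu -> mu = lambda1 \/ lambda2 <= mu) ->
  (forall x y, x != y -> edge_simple_path e x y (Gam x y)) ->
  1 / kappa' e psi Gam <= lambda2 - lambda1.
Proof.
move=> _ [sy irr] _ psi0 psi1 Epsi _ /eigenvalueP [vv Ev vnz] lt12 _ Gp.
pose F := fun i : 'I_n => (vv 0 i : R).
pose c := fun j => (deg e j)%:R + W j.
pose Nb := fun (X : 'I_n -> R) j => \sum_i (if e i j then X i else 0).
have psin : forall x, psi x != 0 by move=> x; rewrite gt_eqF.
have Ep : forall j, c j * psi j - Nb psi j = lambda1 * psi j.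
  move=> j; have := congr1 (fun M : 'M[R]_(1,n) => M 0 j) Epsi; rewrite !mxE /= => <-.
  rewrite -(@ham_row R n e W psi j irr); apply: eq_bigr => k _; by rewrite mxE.
have EF : forall j, c j * F j - Nb F j = lambda2 * F j.
  move=> j; have := congr1 (fun M : 'M[R]_(1,n) => M 0 j) Ev; rewrite !mxE /= => <-.
  by rewrite -(@ham_row R n e W F j irr).
have orth : \sum_j F j * psi j = 0.
  have := @gen_sym R n e c F psi sy; rewrite -/(Nb F) .
  rewrite (eq_bigr (fun j => lambda2 * (F j * psi j))); last by move=> j _; rewrite -/(Nb F) EF mulrA.
  rewrite [X in _ = X -> _](eq_bigr (fun j => lambda1 * (psi j * F j))); last by move=> j _; rewrite -/(Nb psi) Ep mulrA.
  rewrite -!(mulr_sumr) => h.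
  have : (lambda2 - lambda1) * \sum_j F j * psi j = 0.
    rewrite mulrBl h (eq_bigr (fun j => F j * psi j)) ?subrr // => j _; exact: mulrC.
  by move/eqP; rewrite mulf_eq0 subr_eq0 gt_eqF //= => /eqP.
pose N := \sum_j F j ^+ 2.
have Npos : 0 < N.
  rewrite lt_def sumr_ge0 ?andbT; last by move=> j _; rewrite sqr_ge0.
  apply/eqP => N0; move/eqP: vnz; apply; apply/rowP => j; rewrite mxE.
  have := @psumr_eq0P R _ _ (fun j => F j ^+ 2) (fun j _ => sqr_ge0 (F j)) N0 j isT.
  by move/eqP; rewrite sqrf_eq0 => /eqP.
pose g := fun i => F i / psi i.
pose h := fun u v => psi u * psi v * (g v - g u) ^+ 2.
pose a := fun i j => psi i * (F j ^+ 2 / psi j) - F i * F j.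
have hE : forall i j, h i j = a i j + a j i.
  move=> i j; rewrite /h /a /g; field; by rewrite ?psin.
have Xe : \sum_j \sum_i (if e i j then a i j else 0) = (lambda2 - lambda1) * N.
  rewrite (eq_bigr (fun j => \sum_i (if e i j then psi i * (F j ^+ 2 / psi j) else 0)
      - \sum_i (if e i j then F i * F j else 0))); last first.
    by move=> j _; rewrite -sumrB; apply: eq_bigr => i _; rewrite (@if_split R).
  rewrite sumrB -!NbE -sumrB /N mulr_sumr; apply: eq_bigr => j _.
  have e1 : \sum_i (if e i j then psi i else 0) = c j * psi j - lambda1 * psi j.
    by move: (Ep j); rewrite /Nb => <-; ring.
  have e2 : \sum_i (if e i j then F i else 0) = c j * F j - lambda2 * F j.
    by move: (EF j); rewrite /Nb => <-; ring.
  rewrite e1 e2; field; by rewrite ?psin.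
have En : \sum_u \sum_v (if e u v then h u v else 0) = 2 * ((lambda2 - lambda1) * N).
  rewrite exchange_big /=.
  have S1 : \sum_v \sum_u (if e u v then h u v else 0) =
     \sum_v \sum_u (if e u v then a u v else 0) + \sum_v \sum_u (if e u v then a v u else 0).
    rewrite -big_split; apply: eq_bigr => v _; rewrite -big_split; apply: eq_bigr => u _.
    by rewrite hE; case: (e u v) => /=; rewrite ?addr0.
  by rewrite S1 -(@swap2 R n e a sy) Xe; ring.
have inner : forall x, \sum_y psi x ^+ 2 * psi y ^+ 2 * (g x - g y) ^+ 2 =
    F x ^+ 2 * \sum_y psi y ^+ 2 + psi x ^+ 2 * N - 2 * (F x * psi x) * \sum_y F y * psi y.
  move=> x; rewrite /N !mulr_sumr -big_split -sumrB; apply: eq_bigr => y _ /=.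
  rewrite /g; field; by rewrite ?psin.
have Var : \sum_x \sum_y psi x ^+ 2 * psi y ^+ 2 * (g x - g y) ^+ 2 = 2 * N.
  rewrite (eq_bigr _ (fun x _ => inner x)) psi1 orth.
  rewrite (eq_bigr (fun x => F x ^+ 2 + psi x ^+ 2 * N)); last by move=> x _; ring.
  rewrite big_split /= -mulr_suml psi1 /N; ring.
pose L := fun x y => \sum_(z <- path_edges x (Gam x y)) (psi z.1 * psi z.2)^-1.
pose M := fun x y => map (@uedge n) (path_edges x (Gam x y)).
pose term := fun x y u v => if (x != y) && e u v && (uedge (u, v) \in M x y)
  then psi x ^+ 2 * psi y ^+ 2 * L x y * h u v else 0.
have h0 : forall u v, 0 <= h u v.
  by move=> u v; rewrite /h mulr_ge0 ?sqr_ge0 // mulr_ge0 // ltW.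
have StepA : forall x y, psi x ^+ 2 * psi y ^+ 2 * (g x - g y) ^+ 2 <=
    \sum_u \sum_v term x y u v.
  move=> x y; have [exy|nexy] := eqVneq x y.
    rewrite exy subrr expr0n /= mulr0 big1 // => u _; rewrite big1 // => v _.
    by rewrite /term eqxx.
  have [pth lst un] := Gp x y nexy.
  have tel := @telescope R n g x (Gam x y); rewrite lst in tel.
  have cs := @cs_seq R _ (path_edges x (Gam x y)) (fun z => psi z.1 * psi z.2)
     (fun z => g z.2 - g z.1) (fun z => mulr_gt0 (psi0 _) (psi0 _)).
  have sb := @seq_bound R n e x (Gam x y) h pth un h0.
  have sq : (g x - g y) ^+ 2 = (g y - g x) ^+ 2 by ring.
  rewrite sq tel.
  have P0 : 0 <= psi x ^+ 2 * psi y ^+ 2 by rewrite mulr_ge0 ?sqr_ge0.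
  have L0 : 0 <= L x y.
    by apply: sumr_ge0 => z _; rewrite invr_ge0 ltW // mulr_gt0.
  apply: le_trans (ler_wpM2l P0 cs) _.
  apply: le_trans (ler_wpM2l P0 (ler_wpM2l L0 sb)) _.
  rewrite mulrA mulr_sumr; apply: ler_sum => u _; rewrite mulr_sumr; apply: ler_sum => v _.
  rewrite /term nexy /=; case: ifP => _; last by rewrite mulr0.
  exact: lexx.
pose K := fun u v => \sum_x \sum_(y | (x != y) &&
         (uedge (u, v) \in map (@uedge n) (path_edges x (Gam x y))))
       (psi x ^+ 2 * psi y ^+ 2 *
        \sum_(z <- path_edges x (Gam x y)) (psi z.1 * psi z.2)^-1).
pose kap := kappa' e psi Gam.
have Kk : forall u v, e u v -> K u v <= kap.
  move=> u v euv.
  apply: le_trans (@le_bigmax0 R _ (index_enum 'I_n) (fun v => e u v) (fun v => K u v) v (mem_index_enum v) euv) _.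
  exact: (@le_bigmax0 R _ (index_enum 'I_n) (fun _ => true)
     (fun u => \big[Num.max/0]_(v | e u v) K u v) u (mem_index_enum u) isT).
have StepB : 2 * N <= \sum_u \sum_v \sum_x \sum_y term x y u v.
  rewrite -Var.
  have ex : \sum_x \sum_y \sum_u \sum_v term x y u v = \sum_u \sum_v \sum_x \sum_y term x y u v.
    rewrite (eq_bigr (fun x => \sum_u \sum_v \sum_y term x y u v)); last first.
      move=> x _; rewrite exchange_big; apply: eq_bigr => u _; by rewrite exchange_big.
    rewrite exchange_big; apply: eq_bigr => u _; by rewrite exchange_big.
  rewrite -ex; apply: ler_sum => x _; apply: ler_sum => y _; exact: StepA.
have StepC : forall u v, \sum_x \sum_y term x y u v <= (if e u v then kap * h u v else 0).
  move=> u v; case euv: (e u v); last first.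
    rewrite big1 // => x _; rewrite big1 // => y _; by rewrite /term euv andbF.
  have -> : \sum_x \sum_y term x y u v = K u v * h u v.
    rewrite /K mulr_suml; apply: eq_bigr => x _; rewrite mulr_suml [RHS]big_mkcond; apply: eq_bigr => y _.
    by rewrite /term euv andbT; case: ifP; rewrite ?mul0r.
  by rewrite ler_wpM2r // Kk.
have StepE : \sum_u \sum_v (if e u v then kap * h u v else 0) = kap * (2 * ((lambda2 - lambda1) * N)).
  rewrite -En mulr_sumr; apply: eq_bigr => u _; rewrite mulr_sumr; apply: eq_bigr => v _.
  by case: ifP; rewrite ?mulr0.
have fin : 2 * N <= kap * (2 * ((lambda2 - lambda1) * N)).
  rewrite -StepE; apply: le_trans StepB _; apply: ler_sum => u _; apply: ler_sum => v _; exact: StepC.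
have D0 : 0 < lambda2 - lambda1 by rewrite subr_gt0.
have k1 : 1 <= kap * (lambda2 - lambda1) by nra.
have kp : 0 < kap by nra.
by rewrite ler_pdivrMr // mulrC.
Qed.
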